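(* Let $\mathcal{X}$ and $\mathcal{Y}$ be finite sets, let $\mathcal{M}\subseteq\mathcal{X}\times\mathcal{Y}$ be a nonempty set (the actual matches), and let $\hat{\mathcal{M}}_H\subseteq\mathcal{X}\times\mathcal{Y}$ be a fixed set (the matches identified by a holdout batch algorithm, chosen independently of the validation samples). Let $\mathcal{S}_{\mathcal{M}}$ be a sample drawn uniformly at random without replacement from $\mathcal{M}$, and let $\mathcal{S}_{\mathcal{X}}$ be a sample drawn uniformly at random without replacement from $\mathcal{X}$. Let $\hat{\mathcal{M}}\subseteq\mathcal{X}\times\mathcal{Y}$ be a set of identified matches (produced by a ''complete'' algorithm) which may depend arbitrarily on $\mathcal{S}_{\mathcal{M}}$ and $\mathcal{S}_{\mathcal{X}}$, and define its recall $R=|\hat{\mathcal{M}}\cap\mathcal{M}|/|\mathcal{M}|$. For $x\in\mathcal{X}$ let $m(x)=|\{y\in\mathcal{Y}:(x,y)\in\mathcal{M}\}|$, and let $k_y$ be an upper bound on $m(x)$ over all $x\in\mathcal{X}$. Then for any $\delta_1,\delta_2>0$, with probability at least $1-\delta_1-\delta_2$, $$R\ \ge\ p^-(\mathcal{M},\mathcal{S}_{\mathcal{M}},\mathbf{1}_{\hat{\mathcal{M}}_H},0,1,\delta_1)-\frac{|\hat{\mathcal{M}}_H\setminus\hat{\mathcal{M}}|}{|\mathcal{X}|\,p^-(\mathcal{X},\mathcal{S}_{\mathcal{X}},m,0,k_y,\delta_2)}.$$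
   Context: PAC bound rules: $p^+$ and $p^-$ are functions which, given a finite set $\mathcal{P}$ (population), a subset $\mathcal{S}\subseteq\mathcal{P}$, a function $f:\mathcal{P}\to\mathbb{R}$, reals $a\le b$ and $\delta>0$, return a real number, and satisfy the following: for every finite set $\mathcal{P}$ with $|\mathcal{P}|=n$, every sample size $s$, and every $f$ with $a\le f(x)\le b$ for all $x\in\mathcal{P}$, if $\mathcal{S}$ is a size-$s$ sample drawn uniformly at random without replacement from $\mathcal{P}$ and $\mu=\frac1n\sum_{x\in\mathcal{P}}f(x)$, then $\Pr\{\mu>p^+(\mathcal{P},\mathcal{S},f,a,b,\delta)\}\le\delta$ and $\Pr\{\mu<p^-(\mathcal{P},\mathcal{S},f,a,b,\delta)\}\le\delta$. $\mathbf{1}_{A}$ denotes the indicator function of a set $A$. *)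

(* Defs.v *)
From mathcomp Require Import all_boot all_order all_algebra.
Set Implicit Arguments. Unset Strict Implicit. Unset Printing Implicit Defensive.
Import Order.TTheory GRing.Theory Num.Theory.
Local Open Scope ring_scope.

Definition Pr_unif {R : realFieldType} {T : finType} (A : {set T}) (E : pred T) : R :=
  #|[set x in A | E x]|%:R / #|A|%:R.

(* All possible outcomes of drawing a size-s sample uniformly at random
   without replacement from P (each s-subset of P is equally likely). *)
Definition samples (T : finType) (P : {set T}) (s : nat) : {set {set T}} :=
  [set S : {set T} | (S \subset P) && (#|S| == s)].

Definition pop_mean (R : realFieldType) (T : finType) (P : {set T}) (f : T -> R) : R :=
  (\sum_(x in P) f x) / #|P|%:R.

(* A bound rule: given (P, S, f, a, b, delta) returns a real. *)
Definition bound_rule (R : realFieldType) :=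
  forall T : finType, {set T} -> {set T} -> (T -> R) -> R -> R -> R -> R.

Definition lower_PAC_rule (R : realFieldType) (pm : bound_rule R) : Prop :=
  forall (T : finType) (P : {set T}) (s : nat) (f : T -> R) (a b delta : R),
    a <= b -> 0 < delta -> (forall x, x \in P -> a <= f x <= b) ->
    Pr_unif (samples P s) (fun S => pop_mean P f < pm T P S f a b delta) <= delta.

Definition upper_PAC_rule (R : realFieldType) (pp : bound_rule R) : Prop :=
  forall (T : finType) (P : {set T}) (s : nat) (f : T -> R) (a b delta : R),
    a <= b -> 0 < delta -> (forall x, x \in P -> a <= f x <= b) ->
    Pr_unif (samples P s) (fun S => pop_mean P f > pp T P S f a b delta) <= delta.

Definition mcount {R : realFieldType} (X Y : finType) (M : {set X * Y}) (x : X) : R :=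
  #|[set y : Y | (x, y) \in M]|%:R.

Definition indic {R : realFieldType} (T : finType) (A : {set T}) (t : T) : R :=
  (t \in A)%:R.

Definition recall {R : realFieldType} (X Y : finType) (Mhat M : {set X * Y}) : R :=
  #|Mhat :&: M|%:R / #|M|%:R.

(* Main.v *)
Require Import Defs.
From mathcomp Require Import all_boot all_order all_algebra.
Import Order.TTheory GRing.Theory Num.Theory.
Local Open Scope ring_scope.
From mathcomp Require Import lra.

Lemma sum_mcount_nat {X Y : finType} (M : {set X * Y}) :
  (\sum_(x : X) #|[set y : Y | (x, y) \in M]|)%N = #|M|.
Proof.
under eq_bigr => x _ do rewrite -sum1_card.
rewrite pair_big_dep /= -sum1_card.
apply: eq_bigl => -[x y] /=; by rewrite inE.
Qed.

Lemma sum_mcount (R : realFieldType) (X Y : finType) (M : {set X * Y}) :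
  \sum_(x in [set: X]) (@mcount R _ _ M x) = #|M|%:R.
Proof.
rewrite -(@sum_mcount_nat _ _ M) natr_sum; apply: eq_big => // x; by rewrite inE.
Qed.

Lemma sum_indic (R : realFieldType) (T : finType) (M MH : {set T}) :
  \sum_(x in M) (indic MH x : R) = #|M :&: MH|%:R.
Proof.
rewrite (big_mkcond (fun x => x \in M)) /= -sum1_card natr_sum.
rewrite [in RHS](big_mkcond (fun x => x \in M :&: MH)) /=.
apply: eq_bigr => x _; rewrite inE /indic; by case: (x \in M); case: (x \in MH).
Qed.

Lemma samples_ne (T : finType) (P : {set T}) s : (s <= #|P|)%N -> (0 < #|samples P s|)%N.
Proof. move=> h; rewrite /samples cards_draws bin_gt0 //. Qed.
Lemma det (R : realFieldType) (p1 p2 nX m i r d : R):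
 0 < nX -> 0 < m -> 0 < p2 -> p2 <= m / nX -> p1 <= i / m -> i <= r + d -> 0 <= d ->
 p1 - d / (nX * p2) <= r / m.
Proof.
move=> hn hm hp h2 h1 hi hd.
have q : 0 < nX * p2 by rewrite mulr_gt0.
have hq : nX * p2 <= m by rewrite mulrC -ler_pdivlMr.
have e1 : d / m <= d / (nX * p2).
  apply: ler_wpM2l => //; rewrite lef_pV2 ?posrE //.
have e2 : i / m <= r / m + d / m.
  rewrite -mulrDl; apply: ler_wpM2r => //; rewrite invr_ge0 ltW //.
lra.
Qed.

Theorem theorem2 (R : realFieldType) (X Y : finType)
    (M MH : {set X * Y}) (sM sX : nat)
    (Mhat : {set X * Y} -> {set X} -> {set X * Y})
    (ky delta1 delta2 : R) (pm : bound_rule R) :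
  lower_PAC_rule pm ->
  M != set0 ->
  (sM <= #|M|)%N -> (sX <= #|X|)%N ->
  (forall x : X, mcount M x <= ky) ->
  0 < delta1 -> 0 < delta2 ->
  Pr_unif (setX (samples M sM) (samples [set: X] sX))
    (fun S : {set X * Y} * {set X} =>
       let p2 := pm X [set: X] S.2 (mcount M) 0 ky delta2 in
       (0 < p2) ==>
       (pm (X * Y)%type M S.1 (indic MH) 0 1 delta1
          - #|MH :\: Mhat S.1 S.2|%:R / (#|X|%:R * p2)
        <= recall (Mhat S.1 S.2) M))
  >= 1 - delta1 - delta2.
Proof.
move=> hpm hM hsM hsX hky h1 h2.
have [[x0 y0] hxy0] := set0Pn _ hM.
have ky0 : 0 <= ky by apply: le_trans (hky x0); rewrite /mcount ler0n.
have mpos : (0 < #|M|)%N by rewrite card_gt0.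
have Xpos : (0 < #|X|)%N by apply/card_gt0P; exists x0.
set A := samples M sM; set B := samples [set: X] sX.
set mu1 := pop_mean M (@indic R _ MH).
set mu2 := pop_mean [set: X] (@mcount R _ _ M).
set B1 := [set S in A | mu1 < pm (X * Y)%type M S (indic MH) 0 1 delta1].
set B2 := [set S in B | mu2 < pm X [set: X] S (mcount M) 0 ky delta2].
have hB1 : #|B1|%:R / #|A|%:R <= delta1.
  apply: (hpm (X * Y)%type M sM (indic MH) 0 1 delta1) => // x _.
  by rewrite /indic; case: (x \in MH); rewrite /= ?lexx ?ler01.
have hB2 : #|B2|%:R / #|B|%:R <= delta2.
  apply: (hpm X [set: X] sX (mcount M) 0 ky delta2) => // x _.
  by rewrite hky /mcount ler0n.
set E := (fun S : {set X * Y} * {set X} => _ ==> _).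
set G := [set S in setX A B | E S].
have key : forall S, S \in setX A B -> S.1 \notin B1 -> S.2 \notin B2 -> E S.
  move=> [S1 S2] /setXP [hA hB] /= n1 n2.
  rewrite /E /=; apply/implyP => hp.
  have {}n1 : pm (X * Y)%type M S1 (indic MH) 0 1 delta1 <= mu1.
    by rewrite leNgt; apply: contra n1 => h; rewrite /B1 inE hA h.
  have {}n2 : pm X [set: X] S2 (mcount M) 0 ky delta2 <= mu2.
    by rewrite leNgt; apply: contra n2 => h; rewrite /B2 inE hB h.
  have mu1E : mu1 = #|M :&: MH|%:R / #|M|%:R by rewrite /mu1 /pop_mean sum_indic.
  have mu2E : mu2 = #|M|%:R / #|X|%:R by rewrite /mu2 /pop_mean sum_mcount cardsT.
  rewrite /recall.
  apply: (@det _ _ _ _ _ (#|M :&: MH|%:R)) => //.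
  - by rewrite ltr0n.
  - by rewrite ltr0n.
  - by rewrite -mu2E.
  - by rewrite -mu1E.
  - rewrite -natrD ler_nat.
    apply: leq_trans (leq_card_setU _ _).
    apply: subset_leq_card; apply/subsetP => p; rewrite !inE.
    by case: (p \in M); case: (p \in MH); case: (p \in Mhat S1 S2).
have hcard : (#|A| * #|B| <= #|G| + #|B1| * #|B| + #|A| * #|B2|)%N.
  rewrite -cardsX -!cardsX -addnA.
  apply: leq_trans (leq_add (leqnn _) (leq_card_setU _ _)).
  apply: leq_trans (leq_card_setU _ _).
  apply: subset_leq_card; apply/subsetP => -[S1 S2] hS.
  move/setXP: (hS) => [hA hB].
  rewrite !in_setU !in_setX hA hB /= andbT.
  case: (boolP (S1 \in B1)) => n1; first by rewrite orbT.
  case: (boolP (S2 \in B2)) => n2; first by rewrite !orbT.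
  by rewrite inE hS key.
rewrite /Pr_unif -/G cardsX.
have Apos : (0 < #|A|)%N by apply: samples_ne.
have Bpos : (0 < #|B|)%N by apply: samples_ne; rewrite cardsT.
move: hB1 hB2; set a := #|A|%:R; set b := #|B|%:R.
move=> hB1 hB2.
have ha : 0 < a :> R by rewrite ltr0n.
have hb : 0 < b :> R by rewrite ltr0n.
have hc : a * b <= #|G|%:R + #|B1|%:R * b + a * #|B2|%:R :> R.
  by rewrite -!natrM -!natrD ler_nat.
rewrite natrM -/a -/b.
rewrite ler_pdivlMr ?mulr_gt0 //.
rewrite ler_pdivrMr // in hB1; rewrite ler_pdivrMr // in hB2.
nra.
Qed.
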